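(* Let $\{0,1\}$ carry the discrete topology and define $f:\mathbb R\times\mathbb R\to\{0,1\}$ by $f(x,y)=1$ if $x-y\in\mathbb Q$ and $f(x,y)=0$ otherwise. Then for every nonempty open $V\subset\mathbb R$ the set-valued mapping $\mathbb R\ni x\mapsto f_x(V)\in 2^{\{0,1\}}$ is lower quasicontinuous, yet there is no point of $\mathbb R\times\mathbb R$ at which $f$ is horizontally quasicontinuous.
   Context: $f_x(y)=f(x,y)$; $2^Z$ is the set of nonempty subsets of $Z$. A set-valued mapping $F:X\to 2^Z$ is lower quasicontinuous (at every point) if for each $x_0\in X$, each neighborhood $U$ of $x_0$ and each open $W\subset Z$ with $F(x_0)\cap W\neq\emptyset$, there is an open $O$ with $\emptyset\neq O\subset U$ and $F(x)\cap W\neq\emptyset$ for all $x\in O$. $f:X\times Y\to Z$ is horizontally quasicontinuous at $(a,b)$ if for each neighborhood $U$ of $a$, $V$ of $b$, $W$ of $f(a,b)$, there are an open $O$ with $\emptyset\neq O\subset U$ and $y\in V$ with $f(O\times\{y\})\subset W$. *)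

(* Defs.v *)
From Stdlib Require Import Reals QArith Classical ClassicalEpsilon.
Open Scope R_scope.

Definition openR (O : R -> Prop) : Prop :=
  forall x, O x -> exists e, 0 < e /\ forall y, Rabs (y - x) < e -> O y.

Definition nbhdR (a : R) (U : R -> Prop) : Prop :=
  exists O, openR O /\ O a /\ forall x, O x -> U x.

(* {0,1} with the discrete topology: represented by bool, every subset open;
   a neighborhood of z is any set containing z. *)
Definition nbhdB (z : bool) (W : bool -> Prop) : Prop := W z.

Definition is_rational (r : R) : Prop := exists q : Q, r = Q2R q.

Definition f_rat (x y : R) : bool :=
  if excluded_middle_informative (is_rational (x - y)) then true else false.

Definition fx_image (f : R -> R -> bool) (V : R -> Prop) (x : R) (z : bool) : Prop :=
  exists y, V y /\ f x y = z.

(* Lower quasicontinuity at every point of a set-valued map F : R -> 2^{0,1}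
   (Z discrete, so every W : bool -> Prop is open). *)
Definition lower_quasicontinuous (F : R -> bool -> Prop) : Prop :=
  forall x0 (U : R -> Prop) (W : bool -> Prop),
    nbhdR x0 U -> (exists z, F x0 z /\ W z) ->
    exists O : R -> Prop, openR O /\ (exists x, O x) /\ (forall x, O x -> U x) /\
      forall x, O x -> exists z, F x z /\ W z.

Definition horiz_quasicontinuous_at (f : R -> R -> bool) (a b : R) : Prop :=
  forall (U V : R -> Prop) (W : bool -> Prop),
    nbhdR a U -> nbhdR b V -> nbhdB (f a b) W ->
    exists O : R -> Prop, openR O /\ (exists x, O x) /\ (forall x, O x -> U x) /\
      exists y, V y /\ forall x, O x -> W (f x y).

(* Main.v *)
Require Import Defs.
From Stdlib Require Import Reals QArith.
From Stdlib Require Import Lra Lia ZArith Qreduction Qreals Qcanon Classical ClassicalEpsilon.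
Open Scope R_scope.

Lemma rat_plus : forall a b, is_rational a -> is_rational b -> is_rational (a + b).
Proof. intros a b [p ->] [q ->]. exists (p + q)%Q. now rewrite Q2R_plus. Qed.

Lemma rat_opp : forall a, is_rational a -> is_rational (- a).
Proof. intros a [p ->]. exists (- p)%Q. now rewrite Q2R_opp. Qed.

Lemma no_sqrt2_Q : forall q : Q, ~ (q * q == 2)%Q.
Proof.
  intros q H.
  assert (H' : (Qred q * Qred q == 2)%Q).
  { rewrite (Qred_correct q). exact H. }
  assert (G : Z.gcd (Qnum (Qred q)) (QDen (Qred q)) = 1%Z).
  { apply Qred_iff. apply Qred_complete. apply Qred_correct. }
  destruct (Qred q) as [n d]. simpl in G. unfold Qeq in H'. simpl in H'.
  try rewrite Pos2Z.inj_mul in H'. simpl in H'.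
  set (D := Z.pos d) in *.
  assert (E : (n * n = 2 * (D * D))%Z) by lia.
  assert (En : Z.even n = true).
  { destruct (Z.even n) eqn:Ev; auto.
    assert (Z.even (n*n) = true) by (rewrite E, Z.even_mul; reflexivity).
    rewrite Z.even_mul, Ev in H0. discriminate. }
  apply Zeven_bool_iff in En. apply Zeven_ex in En. destruct En as [k Hk].
  assert (E2 : (D * D = 2 * (k * k))%Z) by (subst n; lia).
  assert (Ed : Z.even D = true).
  { destruct (Z.even D) eqn:Ev; auto.
    assert (Z.even (D*D) = true) by (rewrite E2, Z.even_mul; reflexivity).
    rewrite Z.even_mul, Ev in H0. discriminate. }
  apply Zeven_bool_iff in Ed. apply Zeven_ex in Ed. destruct Ed as [j Hj].
  assert (Z.divide 2 (Z.gcd n D)).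
  { apply Z.gcd_greatest; [exists k | exists j]; lia. }
  rewrite G in H0. apply Z.divide_1_r in H0. lia.
Qed.

Lemma sqrt2_irr : ~ is_rational (sqrt 2).
Proof.
  intros [q Hq]. apply (no_sqrt2_Q q). apply eqR_Qeq.
  rewrite Q2R_mult, <- Hq. rewrite sqrt_sqrt by lra.
  unfold Q2R. simpl. field.
Qed.

Lemma rat_dense : forall p e, 0 < e -> exists r, is_rational r /\ Rabs (r - p) < e.
Proof.
  intros p e He.
  destruct (archimed (/ e)) as [Hn1 _].
  set (n := up (/ e)) in *.
  assert (Hie : 0 < / e) by (apply Rinv_0_lt_compat; lra).
  assert (Hn : (0 < n)%Z) by (apply lt_0_IZR; lra).
  destruct (archimed (p * IZR n)) as [Hm1 Hm2].
  set (m := up (p * IZR n)) in *.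
  assert (HnR : 0 < IZR n) by (apply IZR_lt; lia).
  exists (IZR m / IZR n). split.
  - exists (Qmake m (Z.to_pos n)). unfold Q2R. simpl. rewrite Z2Pos.id by lia. reflexivity.
  - assert (A : p < IZR m / IZR n).
    { apply Rmult_lt_reg_r with (IZR n); auto. unfold Rdiv. rewrite Rmult_assoc, Rinv_l by lra. lra. }
    assert (B : IZR m / IZR n <= p + / IZR n).
    { apply Rmult_le_reg_r with (IZR n); auto. unfold Rdiv.
      rewrite Rmult_assoc, Rinv_l by lra. rewrite Rmult_plus_distr_r, Rinv_l by lra. lra. }
    assert (C : / IZR n < e).
    { rewrite <- (Rinv_inv e). apply Rinv_lt_contravar; auto. nra. }
    rewrite Rabs_right by lra. lra.
Qed.

Lemma irr_dense : forall p e, 0 < e -> exists r, ~ is_rational r /\ Rabs (r - p) < e.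
Proof.
  intros p e He. destruct (rat_dense (p - sqrt 2) e He) as [q [Hq Hd]].
  exists (q + sqrt 2). split.
  - intro Hr. apply sqrt2_irr.
    replace (sqrt 2) with ((q + sqrt 2) + - q) by ring.
    apply rat_plus; auto. apply rat_opp; auto.
  - replace (q + sqrt 2 - p) with (q - (p - sqrt 2)) by ring. exact Hd.
Qed.

Lemma f_rat_spec : forall x y, f_rat x y = true <-> is_rational (x - y).
Proof.
  intros x y. unfold f_rat.
  destruct (excluded_middle_informative (is_rational (x - y))); split; intro; auto; discriminate.
Qed.

Theorem mainTheorem2 :
  (forall V : R -> Prop, openR V -> (exists y, V y) ->
     lower_quasicontinuous (fx_image f_rat V)) /\
  (forall a b : R, ~ horiz_quasicontinuous_at f_rat a b).
Proof.
  split.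
  - intros V HV [y0 Hy0].
    destruct (HV y0 Hy0) as [e [He HVe]].
    assert (All : forall x z, fx_image f_rat V x z).
    { intros x z. destruct z.
      + destruct (rat_dense (x - y0) e He) as [r [Hr Hd]].
        exists (x - r). split.
        * apply HVe. replace (x - r - y0) with (- (r - (x - y0))) by ring.
          rewrite Rabs_Ropp. exact Hd.
        * apply f_rat_spec. replace (x - (x - r)) with r by ring. exact Hr.
      + destruct (irr_dense (x - y0) e He) as [r [Hr Hd]].
        exists (x - r). split.
        * apply HVe. replace (x - r - y0) with (- (r - (x - y0))) by ring.
          rewrite Rabs_Ropp. exact Hd.
        * destruct (f_rat x (x - r)) eqn:Ef; auto.
          apply f_rat_spec in Ef. replace (x - (x - r)) with r in Ef by ring.
          contradiction. }
    intros x0 U W [O [HO [HOx HOU]]] [z [_ Hz]].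
    exists O. split; [exact HO|]. split; [exists x0; exact HOx|]. split; [exact HOU|].
    intros x _. exists z. split; auto.
  - intros a b H.
    assert (Nt : forall c, nbhdR c (fun _ => True)).
    { intro c. exists (fun _ => True). split; [|split; auto].
      intros x _. exists 1. split; [lra | auto]. }
    destruct (H (fun _ => True) (fun _ => True) (fun z => z = f_rat a b) (Nt a) (Nt b) eq_refl)
      as [O [HO [[x0 Hx0] [_ [y [_ Hy]]]]]].
    destruct (HO x0 Hx0) as [e [He HOe]].
    destruct (f_rat a b) eqn:Eab.
    + destruct (irr_dense (x0 - y) e He) as [r [Hr Hd]].
      assert (Ox : O (r + y)).
      { apply HOe. replace (r + y - x0) with (r - (x0 - y)) by ring. exact Hd. }
      specialize (Hy _ Ox). apply f_rat_spec in Hy.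
      replace (r + y - y) with r in Hy by ring. contradiction.
    + destruct (rat_dense (x0 - y) e He) as [r [Hr Hd]].
      assert (Ox : O (r + y)).
      { apply HOe. replace (r + y - x0) with (r - (x0 - y)) by ring. exact Hd. }
      specialize (Hy _ Ox).
      assert (f_rat (r + y) y = true) by (apply f_rat_spec; replace (r + y - y) with r by ring; exact Hr).
      congruence.
Qed.
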